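(* Let $(F_n)_{n\ge0}$ be the Fibonacci numbers, $F_0=0$, $F_1=F_2=1$, $F_{n+2}=F_{n+1}+F_n$. Then for every $n\ge2$, $$F_{n-1}F_{\binom{n+1}{2}}=\left(F_{n-1}F_{n+1}+F_nF_{n-2}\right)F_{\binom{n}{2}}+\left(F_nF_{n-1}^2-F_{n-2}F_n^2\right)F_{\binom{n-1}{2}}.$$ *)

(* Defs.v *)
From mathcomp Require Import all_boot all_order all_algebra.
Set Implicit Arguments. Unset Strict Implicit. Unset Printing Implicit Defensive.

Fixpoint fib (n : nat) : nat :=
  match n with
  | 0 => 0
  | 1 => 1
  | (m.+1 as k).+1 => fib k + fib m
  end.

(* Main.v *)
Require Import Defs.
From mathcomp Require Import all_boot all_order all_algebra.
From mathcomp Require Import ring.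
Import GRing.Theory Num.Theory.

Lemma fibSS k : fib k.+2 = fib k.+1 + fib k.
Proof. by []. Qed.

Lemma fib_add a j : fib (a + j.+1) = fib j.+1 * fib a.+1 + fib j * fib a.
Proof.
elim/ltn_ind: j => -[|[|j]] IH.
- by rewrite addn1 /= mul1n mul0n addn0.
- by rewrite addn2 /= !mul1n.
rewrite !addnS fibSS -!addnS !IH //.
rewrite !fibSS; ring.
Qed.

Theorem mainTheorem9 (n : nat) (hn : (2 <= n)%N) :
  ((fib n.-1)%:Z * (fib 'C(n.+1, 2))%:Z =
   ((fib n.-1)%:Z * (fib n.+1)%:Z + (fib n)%:Z * (fib n.-2)%:Z) * (fib 'C(n, 2))%:Z
   + ((fib n)%:Z * (fib n.-1)%:Z ^+ 2 - (fib n.-2)%:Z * (fib n)%:Z ^+ 2)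
       * (fib 'C(n.-1, 2))%:Z)%R.
Proof.
case: n hn => [|[|m]] // _ /=.
set a := 'C(m.+1, 2).
have e1 : 'C(m.+2, 2) = a + m.+1 by rewrite binS bin1.
have e2 : 'C(m.+3, 2) = a + (m.+1 + m.+1).+1 by rewrite binS bin1 e1 -addnA addnS addSn addnS.
rewrite e2 e1 !fib_add.
have h1 : fib (m.+1 + m.+1).+1 = fib m.+2 * fib m.+2 + fib m.+1 * fib m.+1
  by rewrite -(addnS m.+1 m.+1) fib_add.
have h2 : fib (m.+1 + m.+1) = fib m.+1 * fib m.+2 + fib m * fib m.+1
  by rewrite fib_add.
rewrite h1 ?h2 !fibSS.
rewrite !PoszD !PoszM !PoszD.
ring.
Qed.
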